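(* Let $\mathbb{A}=\mathbb{A}_f\times\mathbf{R}$ be the adeles of $\mathbf{Q}$, $Y_\mathbf{Q}=\mathbf{Q}^\times\backslash\mathbb{A}$ and $C_\mathbf{Q}=\mathbf{Q}^\times\backslash\mathbb{A}^\times\subset Y_\mathbf{Q}$. For $a\in\mathbb{A}$ put $L_a=\{q\in\mathbf{Q}\mid qa_f\in\widehat{\mathbf{Z}}\}$. Let $\mathcal F_\eta\subset Y_\mathbf{Q}$ be the set of classes $[a]$ with $a_\infty\neq0$ and $L_a\cong\mathbf{Z}$ as abelian groups. Then $\mathcal F_\eta$ is exactly the set of idele classes, so that $\mathcal F_\eta\cong C_\mathbf{Q}$ canonically. *)

(* Defs.v *)
From mathcomp Require Import all_boot all_order all_algebra.
From mathcomp Require Import reals.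
Set Implicit Arguments. Unset Strict Implicit. Unset Printing Implicit Defensive.
Import Order.TTheory GRing.Theory Num.Theory.
Local Open Scope ring_scope.

(* Profinite integers  Zhat = lim_n Z/nZ.  An element is represented by a    *)
(* function z : nat -> int, where z n is a representative of the component   *)
(* in Z/(n+1)Z; compatibility: for (n+1) | (m+1), z m = z n mod (n+1).       *)
Definition zhat_elt (z : nat -> int) : Prop :=
  forall n m : nat, (n.+1 %| m.+1)%N -> (z m = z n %[mod (n.+1)%:Z])%Z.

Definition zhat_eq (z w : nat -> int) : Prop :=
  forall n : nat, (z n = w n %[mod (n.+1)%:Z])%Z.

(* An adele a = (a_f, a_oo) in A = A_f x R, with A_f = Q (x) Zhat, is        *)
(* represented as a_f = fin_num / fin_den (fin_num in Zhat, fin_den > 0) and *)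
(* a_oo = arch.  Every adele has such a representation.                      *)
Record adele (R : realType) := Adele {
  fin_num : nat -> int;
  fin_den : nat;
  arch : R }.

Definition wf_adele (R : realType) (a : adele R) : Prop :=
  zhat_elt (fin_num a) /\ (0 < fin_den a)%N.

(* equality of adeles: z/d = z'/d' in A_f iff d' z = d z' in Zhat *)
Definition adele_eq (R : realType) (a b : adele R) : Prop :=
  zhat_eq (fun n => (fin_den b)%:Z * fin_num a n)
          (fun n => (fin_den a)%:Z * fin_num b n)
  /\ arch a = arch b.

Definition scale (R : realType) (q : rat) (a : adele R) : adele R :=
  Adele (fun n => numq q * fin_num a n) (absz (denq q) * fin_den a)%N
        (ratr q * arch a).

Definition same_class (R : realType) (a b : adele R) : Prop :=
  exists q : rat, q != 0 /\ adele_eq (scale q a) b.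

Definition in_zhat_frac (x : nat -> int) (d : nat) : Prop :=
  exists w : nat -> int, zhat_elt w /\
    zhat_eq x (fun n => d%:Z * w n).

Definition L_a (R : realType) (a : adele R) (q : rat) : Prop :=
  in_zhat_frac (fun n => numq q * fin_num a n) (absz (denq q) * fin_den a)%N.

Definition iso_to_Z (L : rat -> Prop) : Prop :=
  exists f : int -> rat,
    (forall k l : int, f (k + l) = f k + f l) /\ injective f /\
    (forall q : rat, L q <-> exists k : int, f k = q).

Definition in_Feta (R : realType) (a : adele R) : Prop :=
  arch a != 0 /\ iso_to_Z (L_a a).

(* ideles: units of the ring A = A_f x R *)
Definition is_idele (R : realType) (a : adele R) : Prop :=
  arch a != 0 /\
  exists b : adele R, wf_adele b /\
    zhat_eq (fun n => fin_num a n * fin_num b n)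
            (fun n => (fin_den a * fin_den b)%:Z).

(* Main.v *)
Require Import Defs.
From mathcomp Require Import all_boot all_order all_algebra.
From mathcomp Require Import reals boolp ring lra.
Import Order.TTheory GRing.Theory Num.Theory.
Local Open Scope ring_scope.

Lemma modP (N a b : int) : (a = b %[mod N])%Z <-> (N %| a - b)%Z.
Proof.
split => h; first by rewrite -eqz_mod_dvd; apply/eqP.
by apply/eqP; rewrite eqz_mod_dvd.
Qed.

Lemma eltP z : zhat_elt z <-> forall n m, (n.+1 %| m.+1)%N -> ((n.+1)%:Z %| z m - z n)%Z.
Proof. by split=> h n m nm; [apply/modP; apply: h | apply/modP; apply: h]. Qed.

Lemma zeqP z w : zhat_eq z w <-> forall n, ((n.+1)%:Z %| z n - w n)%Z.
Proof. by split=> h n; [apply/modP; apply: h | apply/modP; apply: h]. Qed.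

Lemma elt_scale (c : int) z : zhat_elt z -> zhat_elt (fun n => c * z n).
Proof.
move/eltP=> h; apply/eltP=> n m nm.
by rewrite -mulrBr dvdz_mull // h.
Qed.

Lemma elt_add z w : zhat_elt z -> zhat_elt w -> zhat_elt (fun n => z n + w n).
Proof.
move/eltP=> h /eltP h'; apply/eltP=> n m nm.
have -> : z m + w m - (z n + w n) = (z m - z n) + (w m - w n) by ring.
by rewrite rpredD ?h ?h'.
Qed.

Lemma frac_ext y y' d d' : (forall n, y n = y' n) -> d = d' ->
  in_zhat_frac y d <-> in_zhat_frac y' d'.
Proof.
move=> h <-; split=> -[w [hw he]]; exists w; split=> // n;
  [rewrite -h | rewrite h]; exact: he.
Qed.

Lemma frac_scale y d' (k : nat) : zhat_elt y -> (0 < k)%N ->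
  in_zhat_frac (fun n => k%:Z * y n) (k * d')%N <-> in_zhat_frac y d'.
Proof.
move=> /eltP hy k0; split.
  move=> [w [/eltP hw /zeqP he]].
  exists (fun n => w (k * n.+1)%N.-1); split.
    apply/eltP=> n m nm.
    have kpos : forall j, (k * j.+1)%N.-1.+1 = (k * j.+1)%N.
      by move=> j; rewrite prednK // muln_gt0 k0.
    have := hw (k * n.+1)%N.-1 (k * m.+1)%N.-1; rewrite !kpos => /(_ (dvdn_mul (dvdnn k) nm)) h.
    apply: (dvdz_trans _ h).
    exact: (dvdn_mull k (dvdnn n.+1)).
  apply/zeqP=> n.
  set M := (k * n.+1)%N.-1.
  have hM : M.+1 = (k * n.+1)%N by rewrite prednK // muln_gt0 k0.
  have h1 := he M; rewrite hM PoszM -mulrA -mulrBr in h1.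
  rewrite PoszM dvdz_mul2l in h1; last by rewrite eqz_nat -lt0n.
  have h2 : (n.+1%:Z %| y M - y n)%Z by apply: hy; rewrite hM dvdn_mull.
  have -> : y n - (d'%:Z * w M) = (y M - d'%:Z * w M) - (y M - y n) by ring.
  by rewrite rpredB.
move=> [w [hw /zeqP he]]; exists w; split=> //; apply/zeqP=> n.
rewrite PoszM -mulrA -mulrBr; exact: dvdz_mull.
Qed.

Definition Lrep (x : nat -> int) (d : nat) (m : int) (k : nat) :=
  in_zhat_frac (fun n => m * x n) (k * d)%N.

Lemma rat_cross (m N : int) (k D : nat) : (0 < k)%N -> (0 < D)%N ->
  (m%:~R / k%:R : rat) = N%:~R / D%:R -> m * D%:Z = N * k%:Z.
Proof.
move=> k0 D0 /eqP; rewrite eqr_div ?pnatr_eq0 -?lt0n //.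
rewrite -[k%:R]/((k%:Z)%:~R : rat) -[D%:R]/((D%:Z)%:~R : rat) -!rmorphM.
by move/eqP/intr_inj.
Qed.

Lemma L_repP (R : realType) (a : adele R) (m : int) (k : nat) (q : rat) :
  zhat_elt (fin_num a) -> (0 < k)%N -> q = m%:~R / k%:R ->
  (L_a a q <-> Lrep (fin_num a) (fin_den a) m k).
Proof.
move=> hx k0 hq.
set N := numq q; set D := `|denq q|%N.
have D0 : (0 < D)%N by rewrite /D absz_gt0 denq_neq0.
have key : m * D%:Z = N * k%:Z.
  apply: rat_cross => //; rewrite -hq /D /N.
  have -> : (`|denq q|%N%:R : rat) = (denq q)%:~R.
    by rewrite -[_%:R]/((`|denq q|%N%:Z)%:~R : rat) absz_denq.
  by rewrite divq_num_den.
rewrite /L_a /Lrep.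
rewrite -(frac_scale _ (D * fin_den a)%N k (elt_scale N _ hx) k0).
rewrite -(frac_scale _ (k * fin_den a)%N D (elt_scale m _ hx) D0).
apply: frac_ext.
  move=> n; rewrite !mulrA; congr (_ * _); by rewrite mulrC -key mulrC.
exact: mulnCA.
Qed.

Lemma natzR (n : nat) : ((n%:Z)%:~R : rat) = n%:R. Proof. by []. Qed.

Lemma denqR (q : rat) : (`|denq q|%N%:R : rat) = (denq q)%:~R.
Proof. by rewrite -natzR absz_denq. Qed.

Lemma qE (q : rat) : q = (numq q)%:~R / (`|denq q|%N)%:R.
Proof. by rewrite denqR divq_num_den. Qed.

Lemma D0q (q : rat) : (0 < `|denq q|%N)%N.
Proof. by rewrite absz_gt0 denq_neq0. Qed.

Lemma L_mul (R : realType) (a : adele R) (t : int) (q : rat) :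
  zhat_elt (fin_num a) -> L_a a q -> L_a a (t%:~R * q).
Proof.
move=> hx hq.
apply/(@L_repP R a (t * numq q) `|denq q|%N _ hx (D0q q)).
  by rewrite {1}(qE q) rmorphM mulrA.
move: hq => [w [hw /zeqP he]]; exists (fun n => t * w n); split.
  exact: elt_scale.
apply/zeqP=> n.
have -> : t * numq q * fin_num a n - (`|denq q| * fin_den a)%N%:Z * (t * w n)
   = t * (numq q * fin_num a n - (`|denq q| * fin_den a)%N%:Z * w n) by ring.
exact: dvdz_mull.
Qed.

Lemma L_add (R : realType) (a : adele R) (q1 q2 : rat) :
  zhat_elt (fin_num a) -> L_a a q1 -> L_a a q2 -> L_a a (q1 + q2).
Proof.
move=> hx h1 h2.
set N1 := numq q1; set N2 := numq q2.
set D1 := `|denq q1|%N; set D2 := `|denq q2|%N.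
have p1 := D0q q1; have p2 := D0q q2.
apply/(@L_repP R a (N1 * D2%:Z + N2 * D1%:Z) (D1 * D2)%N _ hx).
- by rewrite muln_gt0 p1.
- rewrite {1}(qE q1) {1}(qE q2) rmorphD !rmorphM /= !natzR -/D1 -/D2 -/N1 -/N2.
  have d1 : (D1%:R : rat) != 0 by rewrite pnatr_eq0 -lt0n.
  have d2 : (D2%:R : rat) != 0 by rewrite pnatr_eq0 -lt0n.
  by field; rewrite d1 d2.
move: h1 h2 => [w1 [hw1 /zeqP he1]] [w2 [hw2 /zeqP he2]].
exists (fun n => w1 n + w2 n); split; first exact: elt_add.
apply/zeqP=> n.
have -> : (N1 * D2%:Z + N2 * D1%:Z) * fin_num a n - (D1 * D2 * fin_den a)%N%:Z * (w1 n + w2 n)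
   = D2%:Z * (N1 * fin_num a n - (D1 * fin_den a)%N%:Z * w1 n)
     + D1%:Z * (N2 * fin_num a n - (D2 * fin_den a)%N%:Z * w2 n).
  rewrite !PoszM; ring.
by rewrite rpredD // dvdz_mull.
Qed.

Lemma f_int (f : int -> rat) : (forall k l, f (k + l) = f k + f l) ->
  forall k, f k = k%:~R * f 1.
Proof.
move=> H.
have f0 : f 0 = 0.
  have := H 0 0; rewrite addr0 => h.
  by have := congr1 (fun z => z - f 0) h; rewrite subrr addrK.
have fN x : f (- x) = - f x.
  by have := H (- x) x; rewrite addNr f0 => /eqP; rewrite eq_sym addr_eq0 => /eqP.
have fn : forall n : nat, f n%:Z = n%:R * f 1.
  elim=> [|n IH]; first by rewrite mul0r.
  by rewrite -addn1 PoszD H IH natrD mulrDl mul1r.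
case=> n; first by rewrite fn.
by rewrite NegzE fN fn rmorphN mulNr.
Qed.

Lemma Feta_idele (R : realType) (b : adele R) :
  wf_adele b -> in_Feta b -> is_idele b.
Proof.
case=> hx d0 [ha [f [fadd [finj fL]]]]; split=> //.
have fk := @f_int f fadd.
set g := f 1.
have g0 : g != 0.
  apply/eqP => h.
  have : f 1 = f 0 by rewrite (fk 0) mul0r.
  by move/finj.
have Lg : L_a b g by apply/fL; exists 1.
set N := numq g; set D := `|denq g|%N.
case: Lg => w [hw he].
have heP := proj1 (zeqP _ _) he.
have hwP := proj1 (eltP w) hw.
have noP : forall p, prime p -> ~ ((p%:Z) %| w p.-1)%Z.
  move=> p pp hp; have p0 : (0 < p)%N := prime_gt0 pp.
  have hdiv : forall n, (p%:Z %| w (p * n.+1)%N.-1)%Z.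
    move=> n; have := hwP p.-1 (p * n.+1)%N.-1.
    rewrite !prednK ?muln_gt0 ?p0 // => /(_ (dvdn_mulr _ (dvdnn p))) h.
    have -> : w (p * n.+1)%N.-1 = (w (p * n.+1)%N.-1 - w p.-1) + w p.-1 by ring.
    by rewrite rpredD.
  set w' := fun n => (w (p * n.+1)%N.-1 %/ p%:Z)%Z.
  have hw' : forall n, w' n * p%:Z = w (p * n.+1)%N.-1 by move=> n; rewrite divzK.
  have L' : L_a b (g / p%:R).
    apply/(@L_repP R b N (D * p)%N _ hx); first by rewrite muln_gt0 D0q p0.
      by rewrite {1}(qE g) natrM invfM mulrA.
    exists w'; split.
      apply/eltP => n m nm.
      have := hwP (p * n.+1)%N.-1 (p * m.+1)%N.-1.
      rewrite !prednK ?muln_gt0 ?p0 // => /(_ (dvdn_mul (dvdnn p) nm)).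
      by rewrite -!hw' -mulrBl PoszM mulrC dvdz_mul2l // eqz_nat -lt0n.
    apply/zeqP => n.
    have h1 := heP n.
    have h2 : ((n.+1)%:Z %| w (p * n.+1)%N.-1 - w n)%Z.
      by apply: hwP; rewrite prednK ?muln_gt0 ?p0 // dvdn_mull.
    have -> : N * fin_num b n - ((D * p) * fin_den b)%N%:Z * w' n
       = (N * fin_num b n - (D * fin_den b)%N%:Z * w n)
         - (D * fin_den b)%N%:Z * (w' n * p%:Z - w n).
      by rewrite !PoszM; ring.
    by rewrite rpredB // dvdz_mull // hw'.
  have [k hk] : exists k, f k = g / p%:R := proj1 (fL _) L'.
  rewrite fk -/g [g / _]mulrC in hk.
  have hk' : (k%:~R : rat) = p%:R^-1 by move: hk => /(mulIf g0).
  have pn0 : (p%:R : rat) != 0 by rewrite pnatr_eq0 -lt0n.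
  have : (k * p%:Z)%:~R = (1 : rat) by rewrite rmorphM /= hk' natzR mulVf.
  rewrite -[1 : rat]/((1 : int)%:~R) => /intr_inj e.
  have : (p%:Z %| k * p%:Z)%Z by rewrite dvdz_mull.
  rewrite e.
  by rewrite dvdz1 /= => /eqP p1; move: (prime_gt1 pp); rewrite p1.
have cop : forall n, coprimez (w n) (n.+1)%:Z.
  move=> n; apply/negPn/negP => hne.
  have G0 : (0 < gcdn `|w n| n.+1)%N by rewrite gcdn_gt0 orbT.
  have G1 : (1 < gcdn `|w n| n.+1)%N.
    rewrite ltn_neqAle G0 andbT eq_sym; apply: contra hne => /eqP G.
    by rewrite /coprimez /gcdz /= G.
  case: (pdivP G1) => p pp pG.
  apply: (noP p pp).
  have pw : (p%:Z %| w n)%Z by apply: (dvdn_trans pG (dvdn_gcdl _ _)).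
  have pn : (p %| n.+1)%N by apply: (dvdn_trans pG (dvdn_gcdr _ _)).
  have := hwP p.-1 n; rewrite prednK ?prime_gt0 // => /(_ pn) h.
  have -> : w p.-1 = w n - (w n - w p.-1) by ring.
  by rewrite rpredB.
set u := fun n => projT1 (Bezoutz (w n) (n.+1)%:Z).
have hu : forall n, ((n.+1)%:Z %| u n * w n - 1)%Z.
  move=> n; rewrite /u; case: (Bezoutz _ _) => un [vn /= e].
  move: (cop n); rewrite /coprimez => /eqP c; rewrite c in e.
  have -> : un * w n - 1 = - vn * (n.+1)%:Z by rewrite -e; ring.
  exact: dvdz_mull.
have hue : zhat_elt u.
  apply/eltP => n m nm.
  have hm' : ((n.+1)%:Z %| u m * w m - 1)%Z by apply: (dvdz_trans _ (hu m)).
  have -> : u m - u n = - u m * (u n * w n - 1) + u n * (u m * w m - 1)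
                        - u m * u n * (w m - w n) by ring.
  by rewrite rpredB ?rpredD ?dvdz_mull ?hu ?hwP.
exists (Adele (fun n => N * (fin_den b)%:Z * u n) (D * fin_den b) 0); split.
  split; [exact: elt_scale | by rewrite /= muln_gt0 D0q].
apply/zeqP => n /=.
have -> : fin_num b n * (N * (fin_den b)%:Z * u n) - (fin_den b * (D * fin_den b))%N%:Z
   = (fin_den b)%:Z * u n * (N * fin_num b n - (D * fin_den b)%N%:Z * w n)
     + (D * fin_den b * fin_den b)%N%:Z * (u n * w n - 1).
  by rewrite !PoszM; ring.
by rewrite rpredD ?dvdz_mull ?hu ?heP.
Qed.

Lemma ex_min (P : nat -> Prop) : (exists n, P n) ->
  exists n, P n /\ forall m, P m -> (n <= m)%N.
Proof.
move=> [n Pn].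
have ex : exists n, `[< P n >] by exists n; apply/asboolP.
case: (ex_minnP ex) => m /asboolP Pm mmin.
by exists m; split => // k /asboolP /mmin.
Qed.

Lemma idele_Feta (R : realType) (b : adele R) :
  wf_adele b -> is_idele b -> in_Feta b.
Proof.
case=> hx d0 [ha [c [[hy e0] hxy]]]; split => //.
have hxyP := proj1 (zeqP _ _) hxy.
have hxP := proj1 (eltP _) hx.
have F1 : forall q, L_a b q -> exists j : int, q * (fin_den c)%:R = j%:~R.
  move=> q [w [hw /zeqP he]].
  set N := numq q; set D := `|denq q|%N.
  have Dd0 : (0 < D * fin_den b)%N by rewrite muln_gt0 D0q.
  set M := (D * fin_den b)%N.-1.
  have h1 := he M; rewrite prednK // in h1.
  have h2 := hxyP M; rewrite prednK // in h2.
  have h3 : ((D * fin_den b)%N%:Z %| N * fin_num b M)%Z.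
    have -> : N * fin_num b M = (N * fin_num b M - (D * fin_den b)%N%:Z * w M)
        + (D * fin_den b)%N%:Z * w M by ring.
    by rewrite rpredD // dvdz_mulr.
  have h4 : ((D * fin_den b)%N%:Z %| (N * (fin_den c)%:Z) * (fin_den b)%:Z)%Z.
    have -> : (N * (fin_den c)%:Z) * (fin_den b)%:Z
       = (N * fin_num b M) * fin_num c M
         - N * (fin_num b M * fin_num c M - (fin_den b * fin_den c)%N%:Z).
      by rewrite PoszM; ring.
    by rewrite rpredB // ?(dvdz_mulr _ h3) // dvdz_mull.
  rewrite PoszM dvdz_mul2r in h4; last by rewrite eqz_nat -lt0n.
  exists ((N * (fin_den c)%:Z) %/ D%:Z)%Z.
  have e1 := divzK h4.
  have Dn : (D%:R : rat) != 0 by rewrite pnatr_eq0 -lt0n D0q.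
  apply: (mulIf Dn).
  rewrite -(natzR D) -rmorphM e1 rmorphM /= {1}(qE q) !natzR -/N -/D.
  by field.
set e := fin_den c.
have en : (e%:R : rat) != 0 by rewrite pnatr_eq0 -lt0n.
have Ld : L_a b (fin_den b)%:R.
  apply/(@L_repP R b (fin_den b)%:Z 1%N _ hx) => //; first by rewrite divr1.
  exists (fin_num b); split => //; apply/zeqP => n.
  by rewrite mul1n subrr dvdz0.
have exP : exists n, (0 < n)%N /\ L_a b (n%:R / e%:R).
  exists (fin_den b * e)%N; split; first by rewrite muln_gt0 d0.
  by rewrite natrM mulfK.
case: (ex_min _ exP) => j0 [[j00 Lj0] j0min].
have g0 : (j0%:R / e%:R : rat) != 0 by rewrite mulf_neq0 ?invr_eq0 // pnatr_eq0 -lt0n.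
exists (fun k : int => k%:~R * (j0%:R / e%:R)); split.
  by move=> k l; rewrite rmorphD mulrDl.
split.
  by move=> k l /(mulIf g0) /intr_inj.
move=> q; split; last first.
  by move=> [k <-]; apply: L_mul.
move=> Lq; case: (F1 q Lq) => j hj.
have j0n : (j0%:Z != 0) by rewrite eqz_nat -lt0n.
have [t [r [jE [r0 rlt]]]] : exists t r, j = t * j0%:Z + r /\ 0 <= r /\ r < j0%:Z.
  exists (j %/ j0%:Z)%Z, (j %% j0%:Z)%Z; split; first exact: divz_eq.
  by split; [exact: modz_ge0 | have := ltz_mod j j0n].
have qE' : q = j%:~R / e%:R by rewrite -hj mulfK.
have Lr : L_a b (r%:~R / e%:R).
  have -> : (r%:~R / e%:R : rat) = q + (- t)%:~R * (j0%:R / e%:R).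
    rewrite qE' jE rmorphD rmorphM /= rmorphN /= natzR; field.
    by [].
  by apply: L_add => //; apply: L_mul.
have rE : (`|r|%N)%:Z = r by rewrite gez0_abs.
case: (posnP `|r|%N) => rn.
  exists t; rewrite qE' jE.
  have -> : r = 0 by rewrite -rE rn.
  by rewrite addr0 rmorphM /= natzR mulrA.
have := j0min `|r|%N; rewrite -natzR rE => /(_ (conj rn Lr)).
move=> h; move: rlt; rewrite -rE ltz_nat => /leq_trans /(_ h).
by rewrite ltnn.
Qed.

Theorem theorem7p9 (R : realType) (a : adele R) :
  wf_adele a ->
  ((exists b : adele R, wf_adele b /\ same_class a b /\ in_Feta b) <->
   (exists b : adele R, wf_adele b /\ same_class a b /\ is_idele b)).
Proof.
move=> _; split=> -[b [wb [sc h]]]; exists b; split=> //; split=> //.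
  exact: Feta_idele.
exact: idele_Feta.
Qed.
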